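(* Let $H$ be a planar graph that is minimal $Q$-triconnected for a set $Q\subseteq V(H)$ of terminals, and let $T$ be a terminal-bounded tree of $H$. A vertex of $T$ is a terminal if and only if it is a leaf of $T$.
   Context: Two vertices are triconnected if there are three internally vertex-disjoint paths between them. $H$ is $Q$-triconnected if every pair of vertices of $Q$ is triconnected; it is minimal if deleting any edge or vertex violates this. Vertices of $Q$ are terminals. A subgraph is terminal-free if it is connected and contains no terminal. A terminal-bounded component is either a single edge joining two terminals, or is obtained from a maximal terminal-free subgraph $S$ by adding all edges from $S$ to its neighbours (all of which are terminals); in such $H$ these components are trees, called terminal-bounded trees. *)

(* Defs.v *)
From mathcomp Require Import all_boot.
From Stdlib Require Import Reals.

Set Implicit Arguments.
Unset Strict Implicit.
Unset Printing Implicit Defensive.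

Section Graphs.
Variable T : finType.

Definition simple_graph (V : {set T}) (E : {set {set T}}) : Prop :=
  forall f, f \in E -> exists x y, [/\ x != y, x \in V, y \in V & f = [set x; y]].

Definition adj (E : {set {set T}}) (x y : T) : bool := [set x; y] \in E.

Definition gpath (V : {set T}) (E : {set {set T}}) (u v : T) (p : seq T) : Prop :=
  [/\ path (adj E) u p, uniq (u :: p), all (fun x => x \in V) (u :: p)
    & last u p = v].

Definition interior (u : T) (p : seq T) : seq T := behead (belast u p).

Definition int_disjoint (u : T) (p q : seq T) : Prop :=
  forall x, x \in interior u p -> x \notin interior u q.

Definition triconnected (V : {set T}) (E : {set {set T}}) (u v : T) : Prop :=
  exists p1 p2 p3 : seq T,
    [/\ gpath V E u v p1, gpath V E u v p2, gpath V E u v p3,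
        [/\ p1 != p2, p1 != p3 & p2 != p3] &
        [/\ int_disjoint u p1 p2, int_disjoint u p1 p3 & int_disjoint u p2 p3]].

Definition Q_triconnected (V : {set T}) (E : {set {set T}}) (Q : {set T}) : Prop :=
  Q \subset V /\
  forall u v, u \in Q -> v \in Q -> u != v -> triconnected V E u v.

Definition del_vertex_E (E : {set {set T}}) (v : T) : {set {set T}} :=
  [set f in E | v \notin f].

Definition minimal_Q_triconnected (V : {set T}) (E : {set {set T}}) (Q : {set T}) : Prop :=
  [/\ Q_triconnected V E Q,
      (forall f, f \in E -> ~ Q_triconnected V (E :\ f) Q) &
      (forall v, v \in V -> ~ Q_triconnected (V :\ v) (del_vertex_E E v) Q)].

Definition connected_graph (V : {set T}) (E : {set {set T}}) : Prop :=
  forall x y, x \in V -> y \in V -> exists p, gpath V E x y p.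

Definition induced_E (E : {set {set T}}) (S : {set T}) : {set {set T}} :=
  [set f in E | f \subset S].

Definition terminal_free (V : {set T}) (E : {set {set T}}) (Q : {set T})
  (S : {set T}) : Prop :=
  [/\ S != set0, S \subset V :\: Q & connected_graph S (induced_E E S)].

Definition max_terminal_free (V : {set T}) (E : {set {set T}}) (Q : {set T})
  (S : {set T}) : Prop :=
  terminal_free V E Q S /\
  forall S' : {set T}, S \subset S' -> terminal_free V E Q S' -> S' = S.

Definition nbrs (V : {set T}) (E : {set {set T}}) (S : {set T}) : {set T} :=
  [set y in V | [exists x in S, adj E x y]].

Definition terminal_bounded (V : {set T}) (E : {set {set T}}) (Q : {set T})
  (VT : {set T}) (ET : {set {set T}}) : Prop :=
  (exists a b, [/\ a \in Q, b \in Q, a != b, [set a; b] \in E &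
                  VT = [set a; b] /\ ET = [set [set a; b]]])
  \/
  (exists S, [/\ max_terminal_free V E Q S,
                 VT = S :|: nbrs V E S &
                 ET = [set f in E | f :&: S != set0]]).

(* a cycle: at least 3 distinct vertices, consecutive adjacent, closing edge *)
Definition has_cycle (V : {set T}) (E : {set {set T}}) : Prop :=
  exists u p, [/\ 2 <= size p, path (adj E) u p, uniq (u :: p),
                 all (fun x => x \in V) (u :: p) & adj E (last u p) u].

Definition is_tree (V : {set T}) (E : {set {set T}}) : Prop :=
  connected_graph V E /\ ~ has_cycle V E.

Definition degree (E : {set {set T}}) (x : T) : nat := #|[set f in E | x \in f]|.

Definition is_leaf (V : {set T}) (E : {set {set T}}) (x : T) : Prop :=
  x \in V /\ degree E x = 1.

Local Open Scope R_scope.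

Definition in01 (t : R) : Prop := 0 <= t <= 1.

Definition cont_on01 (g : R -> R * R) : Prop :=
  forall t, in01 t -> forall eps, 0 < eps -> exists delta, 0 < delta /\
    forall s, in01 s -> Rabs (s - t) < delta ->
      Rabs (fst (g s) - fst (g t)) < eps /\ Rabs (snd (g s) - snd (g t)) < eps.

Definition planar (V : {set T}) (E : {set {set T}}) : Prop :=
  exists (pos : T -> R * R) (arc : {set T} -> R -> R * R),
    [/\ (forall x y, x \in V -> y \in V -> pos x = pos y -> x = y),
        (forall f, f \in E ->
           [/\ cont_on01 (arc f),
               (forall s t, in01 s -> in01 t -> arc f s = arc f t -> s = t),
               (exists x y, f = [set x; y] /\ arc f 0 = pos x /\ arc f 1 = pos y) &
               (forall t w, 0 < t < 1 -> w \in V -> arc f t <> pos w)]) &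
        (forall f g, f \in E -> g \in E -> f <> g ->
           forall s t, in01 s -> in01 t -> arc f s = arc g t ->
             (s = 0 \/ s = 1) /\ (t = 0 \/ t = 1))].

End Graphs.

(* Main.v *)
Set Warnings "-notation-overridden".
Require Import Defs.
From mathcomp Require Import all_boot.

Set Implicit Arguments.
Unset Strict Implicit.
Unset Printing Implicit Defensive.

Lemma mem_head_or (T:eqType) (s:T) p z : z \in p -> z \in s :: p.
Proof. by move=> h; rewrite inE h orbT. Qed.

Lemma gpath_mono (T:finType) (V V' : {set T}) (E E' : {set {set T}}) u v p :
  V \subset V' -> (forall a b, adj E a b -> adj E' a b) ->
  gpath V E u v p -> gpath V' E' u v p.
Proof.
move=> sVV' sEE' [pp up ap lp]; split=> //.
- exact: sub_path pp.
- apply/allP=> z zin; apply: (subsetP sVV'); exact: (allP ap).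
Qed.

Lemma path_del (T:finType) (E : {set {set T}}) x u p :
  x \notin u :: p -> path (adj E) u p -> path (adj (del_vertex_E E x)) u p.
Proof.
elim: p u => [|b p IH] u //=.
rewrite !inE !negb_or => /andP[xu /andP[xb xp]] /andP[eub pb].
apply/andP; split.
  by move: eub; rewrite /adj /del_vertex_E inE => ->; rewrite !inE negb_or xu xb.
by apply: IH => //; rewrite inE negb_or xb xp.
Qed.

Lemma deg1_uniq (T:finType) (E : {set {set T}}) x : degree E x = 1 ->
  forall f g, f \in E -> g \in E -> x \in f -> x \in g -> f = g.
Proof.
move=> /eqP/cards1P[h Dh] f g fE gE xf xg.
have: f \in [set h] by rewrite -Dh inE fE xf.
have: g \in [set h] by rewrite -Dh inE gE xg.
by rewrite !inE => /eqP-> /eqP->.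
Qed.

Lemma not_on_path (T:finType) (V : {set T}) E x u v p :
  gpath V E u v p -> x != u -> x != v ->
  (forall f g, f \in E -> g \in E -> x \in f -> x \in g -> f = g) ->
  x \notin u :: p.
Proof.
move=> [pp up ap lp] xu xv uniqE.
rewrite inE negb_or xu /=; apply/negP=> xp.
case/splitPr: xp pp up lp => p1 p2.
case: p2 => [|b p2].
  by move=> _ _; rewrite last_cat /= => lx; rewrite lx eqxx in xv.
move=> pp up _.
rewrite cat_path /= in pp; case/and4P: pp => _ e1 e2 _.
rewrite -cat_cons cat_uniq in up; case/and3P: up => _ hn u2.
have xb : x != b by move: u2 => /andP[]; rewrite inE negb_or => /andP[].
have ab : last u p1 != b.
  apply/negP => /eqP eab; move/hasPn: hn => /(_ b).
  by rewrite !inE eqxx orbT => /(_ isT); rewrite -eab -in_cons mem_last.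
have xa : x \in [set last u p1; x] by rewrite !inE eqxx orbT.
have xb' : x \in [set x; b] by rewrite !inE eqxx.
have feq := uniqE _ _ e1 e2 xa xb'.
have : b \in [set last u p1; x] by rewrite feq !inE eqxx orbT.
by rewrite !inE => /orP[]; [rewrite eq_sym (negbTE ab) | rewrite eq_sym (negbTE xb)].
Qed.

Lemma gpath_del (T:finType) (V : {set T}) E x u v p :
  gpath V E u v p -> x != u -> x != v -> degree E x = 1 ->
  gpath (V :\ x) (del_vertex_E E x) u v p.
Proof.
move=> gp xu xv dx.
have xn := not_on_path gp xu xv (deg1_uniq dx).
case: gp => pp up ap lp; split=> //.
- exact: path_del.
- apply/allP=> z zin; rewrite !inE (allP ap _ zin) andbT.
  by apply/negP=> /eqP ezx; rewrite -ezx zin in xn.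
Qed.

Lemma conn_add (T:finType) (E : {set {set T}}) (S : {set T}) s y :
  connected_graph S (induced_E E S) -> s \in S -> y \notin S ->
  [set s; y] \in E -> connected_graph (y |: S) (induced_E E (y |: S)).
Proof.
move=> cS sS yS syE.
have mono : forall a b p, a \in S -> b \in S -> gpath S (induced_E E S) a b p ->
    gpath (y |: S) (induced_E E (y |: S)) a b p.
  move=> a b p _ _; apply: gpath_mono; first exact: subsetUr.
  move=> c d; rewrite /adj /induced_E !inE => /andP[-> cdS] /=.
  by apply: subset_trans cdS (subsetUr _ _).
have eSy : adj (induced_E E (y |: S)) s y.
  rewrite /adj /induced_E inE syE /=; apply/subsetP=> z.
  by rewrite !inE => /orP[]/eqP->; rewrite ?eqxx ?sS ?orbT.
have eyS : adj (induced_E E (y |: S)) y s by rewrite /adj setUC.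
have allS : forall a p, gpath S (induced_E E S) a s p -> y \notin a :: p.
  move=> a p [_ _ ap _]; apply/negP=> yin; move: (allP ap _ yin).
  by rewrite (negbTE yS).
move=> a b; rewrite !inE => /orP[/eqP->|aS] /orP[/eqP->|bS].
- by exists [::]; split; rewrite //= !inE eqxx.
- have [p [pp up ap lp]] := cS s b sS bS.
  exists (s :: p); split=> //=.
  + rewrite eyS /=; case: (mono _ _ _ sS bS (And4 pp up ap lp)) => //.
  + apply/andP; split; last exact: up.
    by apply/negP=> yin; move: (allP ap _ yin); rewrite (negbTE yS).
  + rewrite !inE eqxx sS orbT /=.
    by apply/allP=> z zin; rewrite !inE (allP ap z (mem_head_or s zin)) orbT.
- have gp := cS a s aS sS.
  case: gp => p [pp up ap lp].
  have yn := allS a p (And4 pp up ap lp).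
  exists (rcons p y); split.
  + rewrite rcons_path lp eSy andbT.
    by case: (mono _ _ _ aS sS (And4 pp up ap lp)).
  + by rewrite -rcons_cons rcons_uniq yn up.
  + apply/allP=> z; rewrite -rcons_cons mem_rcons inE => /orP[/eqP->|zin].
      by rewrite !inE eqxx.
    by rewrite !inE (allP ap _ zin) orbT.
  + by rewrite last_rcons.
- have [p gp] := cS a b aS bS; exists p; exact: mono.
Qed.

Theorem lemma14 (T : finType) (V : {set T}) (E : {set {set T}}) (Q : {set T})
    (VT : {set T}) (ET : {set {set T}}) :
  simple_graph V E ->
  planar V E ->
  minimal_Q_triconnected V E Q ->
  terminal_bounded V E Q VT ET ->
  is_tree VT ET ->
  forall x, x \in VT -> (x \in Q <-> is_leaf VT ET x).
Proof.
move=> sg _ [QT Emin Vmin] TB [Tconn Tnc] x xVT.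
case: TB => [[a [b [aQ bQ ab abE [eVT eET]]]]|[S [[TF Smax] eVT eET]]].
  subst VT ET; split.
    move=> _; split=> //; apply/eqP/cards1P; exists [set a; b].
    apply/setP=> f; rewrite !inE; apply/andP/idP.
      by case.
    by move=> fe; split=> //; rewrite (eqP fe).
  by case=> _ _; move: xVT; rewrite !inE => /orP[]/eqP->.
case: TF => [S0 SVQ Sconn].
have SV : forall z, z \in S -> z \in V /\ z \notin Q.
  by move=> z zS; move: (subsetP SVQ _ zS); rewrite !inE => /andP[-> ->].
have F1 : forall y, y \in nbrs V E S -> y \notin S -> y \in Q.
  move=> y; rewrite /nbrs inE => /andP[yV /existsP[s /andP[sS syE]]] yS.
  apply/negPn/negP=> yQ.
  have TF' : terminal_free V E Q (y |: S).
    split.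
    - by apply/set0Pn; exists y; rewrite !inE eqxx.
    - apply/subsetP=> z; rewrite !inE => /orP[/eqP->|zS]; first by rewrite yQ yV.
      by have [-> ->] := SV z zS.
    - exact: conn_add Sconn sS yS syE.
  have := Smax _ (subsetUr _ _) TF'.
  move/setP=> /(_ y); rewrite !inE eqxx /= => yS'.
  by rewrite -yS' in yS.
subst VT ET; split.
- move=> xQ.
  have xS : x \notin S by apply/negP=> xS; have [_ /negP] := SV x xS.
  have xN : x \in nbrs V E S by move: xVT; rewrite inE (negbTE xS).
  move: (xN); rewrite /nbrs inE => /andP[xV /existsP[s /andP[sS sxE]]].
  split=> //; apply/eqP/cards1P; exists [set s; x].
  apply/setP=> f; rewrite !inE; apply/idP/idP; last first.
    move/eqP=> ->; rewrite -/(adj E s x) sxE /= !inE eqxx orbT andbT.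
    by apply/set0Pn; exists s; rewrite !inE eqxx sS.
  case/andP=> /andP[fE /set0Pn[s' ]]; rewrite inE => /andP[s'f s'S] xf.
  have [a [b [ab _ _ fab]]] := sg f fE.
  have xs' : x != s' by apply/negP=> /eqP e; rewrite e s'S in xS.
  have fe : f = [set s'; x].
    rewrite fab; move: xf s'f xs'; rewrite fab !inE.
    case/orP=> /eqP-> /orP[]/eqP->; rewrite ?eqxx //= => _.
      by rewrite setUC.
  apply/eqP; rewrite fe; case: (eqVneq s s') => [->//|ss'].
  exfalso; apply: Tnc.
  have [p [pp up ap lp]] := Sconn s s' sS s'S.
  exists x, (s :: p); split.
  + by case: p lp {pp up ap} => [/= e|]; [rewrite e eqxx in ss'|].
  + rewrite /=; apply/andP; split.
      rewrite /adj inE setUC -/(adj E s x) sxE /=; apply/set0Pn; exists s.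
      by rewrite !inE eqxx sS ?orbT.
    apply: sub_path pp => c d; rewrite /adj /induced_E !inE => /andP[-> cdS] /=.
    by apply/set0Pn; exists c; rewrite inE (subsetP cdS) ?inE ?eqxx.
  + rewrite cons_uniq up andbT; apply/negP=> xin.
    by move: (allP ap _ xin); rewrite (negbTE xS).
  + apply/allP=> z; rewrite inE => /orP[/eqP->//|zin].
    by rewrite inE (allP ap _ zin).
  + rewrite /= lp /adj -fe inE fE /=; apply/set0Pn; exists s'.
    by rewrite inE s'f s'S.
- case=> _ dx; apply/negPn/negP=> xQ.
  have xS : x \in S.
    apply/negPn/negP=> xS; move: xVT; rewrite inE (negbTE xS) /= => xN.
    by rewrite (F1 x xN xS) in xQ.
  have [xV _] := SV x xS.
  have dE : degree E x = 1.
    rewrite -dx /degree.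
    apply: eq_card => f; rewrite !inE.
    case xf: (x \in f); rewrite ?andbF //= !andbT; case fE: (f \in E) => //=.
    by apply/esym/set0Pn; exists x; rewrite inE xf xS.
  apply: (Vmin x xV); split.
    apply/subsetP=> z zQ; rewrite !inE (subsetP QT.1 _ zQ) andbT.
    by apply/negP=> /eqP ezx; move: zQ; rewrite ezx (negbTE xQ).
  move=> u v uQ vQ uv.
  have xu : x != u by apply/negP=> /eqP e; move: uQ; rewrite -e (negbTE xQ).
  have xv : x != v by apply/negP=> /eqP e; move: vQ; rewrite -e (negbTE xQ).
  have [p1 [p2 [p3 [g1 g2 g3 dif dis]]]] := QT.2 u v uQ vQ uv.
  by exists p1, p2, p3; split=> //; apply: gpath_del.
Qed.
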